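(* Let $p$ be a random partition and let $\mathrm{Sh}^p$ be its $p$-Shapley value, $$\mathrm{Sh}^p_i(w)=\sum_{(T,\tau)\in\mathcal{E}(N\setminus\{i\})}\Big(p_N(\{T\cup\{i\}\}\cup\tau)\,w(T\cup\{i\},\tau)-\frac{t}{n-t}\sum_{B\in\tau\cup\{\emptyset\}}p_N(\{T\}\cup\tau_{+i\leadsto B})\,w(T,\tau_{+i\leadsto B})\Big)$$ for $N\subseteq\mathbf{U}$, $w\in\mathbb{W}(N)$, $i\in N$. Then $\mathrm{Sh}^p$ satisfies monotonicity if and only if $p=p^\star$, i.e., if and only if $\mathrm{Sh}^p=\mathrm{MPW}$.
   Context: $\mathbf{U}$ is a finite set of players; cardinalities of $N,S,T,B$ are $n,s,t,b$. $\Pi(N)$ is the set of partitions of $N$ ($\Pi(\emptyset)=\{\emptyset\}$). A random partition is $p=(p_N)_{N\subseteq\mathbf{U}}$ with $p_N$ a probability distribution on $\Pi(N)$; $p^\star$ is the Ewens distribution $p^\star_N(\pi)=\frac{\prod_{B\in\pi}(b-1)!}{n!}$. $\pi_{+i\leadsto B}=(\pi\setminus\{B\})\cup\{B\cup\{i\}\}$ for $B\in\pi$, $\pi_{+i\leadsto\emptyset}=\pi\cup\{\{i\}\}$. Embedded coalitions $\mathcal{E}(N)=\{(S,\pi):S\subseteq N,\pi\in\Pi(N\setminus S)\}$; a TUX game on $N$ is $w:\mathcal{E}(N)\to\mathbb{R}$ with $w(\emptyset,\pi)=0$; $\mathbb{W}(N)$ their set. A solution $\varphi$ (assigning $\varphi(w)\in\mathbb{R}^N$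 to each $w\in\mathbb{W}(N)$) satisfies monotonicity if for all $N$, $w,z\in\mathbb{W}(N)$ and $i\in N$ with $w(S\cup\{i\},\pi)-w(S,\pi_{+i\leadsto B})\ge z(S\cup\{i\},\pi)-z(S,\pi_{+i\leadsto B})$ for all $(S,\pi)\in\mathcal{E}(N\setminus\{i\})$ and $B\in\pi\cup\{\emptyset\}$, we have $\varphi_i(w)\ge\varphi_i(z)$. The Shapley value of a TU game $v$ is $\mathrm{Sh}_i(v)=\sum_{S\subseteq N\setminus\{i\}}\frac{s!(n-s-1)!}{n!}(v(S\cup\{i\})-v(S))$; the MPW solution is $\mathrm{MPW}(w)=\mathrm{Sh}(\bar v^\star_w)$ with $\bar v^\star_w(S)=\sum_{\pi\in\Pi(N\setminus S)}p^\star_{N\setminus S}(\pi)w(S,\pi)$. *)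

(* Defs.v *)
From mathcomp Require Import all_boot all_order all_algebra.
Set Implicit Arguments. Unset Strict Implicit. Unset Printing Implicit Defensive.
Import Order.TTheory GRing.Theory Num.Theory.
Local Open Scope ring_scope.

Section TUX.
Variables (U : finType) (R : realFieldType).

(* A random partition: p N is a probability distribution on Pi(N),
   encoded as a function on {set {set U}} vanishing outside Pi(N).
   mathcomp's [partition P N] = cover P = N, trivIset P, set0 \notin P;
   so Pi(set0) = {set0}. *)
Definition random_partition (p : {set U} -> {set {set U}} -> R) : Prop :=
  forall N : {set U},
    (forall P, partition P N -> 0 <= p N P) /\
    (forall P, ~~ partition P N -> p N P = 0) /\
    \sum_(P | partition P N) p N P = 1.

Definition ewens (N : {set U}) (P : {set {set U}}) : R :=
  if partition P N then
    (\prod_(B in P) ((#|B|.-1)`!)%:R) / ((#|N|)`!)%:R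
  else 0.

Definition add_to (pi : {set {set U}}) (i : U) (B : {set U}) : {set {set U}} :=
  if B == set0 then [set i] |: pi
  else (B :|: [set i]) |: (pi :\ B).

(* TUX games on N: w : embedded coalitions -> R, only values on E(N) matter;
   w(set0, pi) = 0 for pi in Pi(N). *)
Definition is_game (N : {set U}) (w : {set U} -> {set {set U}} -> R) : Prop :=
  forall pi, partition pi N -> w set0 pi = 0.

Definition ShP (p : {set U} -> {set {set U}} -> R) (N : {set U})
    (w : {set U} -> {set {set U}} -> R) (i : U) : R :=
  \sum_(T : {set U} | T \subset N :\ i)
   \sum_(tau : {set {set U}} | partition tau ((N :\ i) :\: T))
    ( p N ((T :|: [set i]) |: tau) * w (T :|: [set i]) tau
      - ((#|T|)%:R / (#|N| - #|T|)%:R) *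
        \sum_(B in set0 |: tau) p N (T |: add_to tau i B) * w T (add_to tau i B)).

Definition monotone
    (phi : {set U} -> ({set U} -> {set {set U}} -> R) -> U -> R) : Prop :=
  forall (N : {set U}) (w z : {set U} -> {set {set U}} -> R) (i : U),
    is_game N w -> is_game N z -> i \in N ->
    (forall (S : {set U}) (pi : {set {set U}}),
        S \subset N :\ i -> partition pi ((N :\ i) :\: S) ->
        forall B, B \in set0 |: pi ->
          z (S :|: [set i]) pi - z S (add_to pi i B)
            <= w (S :|: [set i]) pi - w S (add_to pi i B)) ->
    phi N z i <= phi N w i.

Definition shapley (N : {set U}) (v : {set U} -> R) (i : U) : R :=
  \sum_(S : {set U} | S \subset N :\ i)
    (((#|S|)`! * (#|N| - #|S| - 1)`!)%:R / ((#|N|)`!)%:R)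
      * (v (S :|: [set i]) - v S).

Definition vbar_star (N : {set U}) (w : {set U} -> {set {set U}} -> R)
    (S : {set U}) : R :=
  \sum_(P | partition P (N :\: S)) ewens (N :\: S) P * w S P.

Definition MPW (N : {set U}) (w : {set U} -> {set {set U}} -> R) (i : U) : R :=
  shapley N (vbar_star N w) i.

End TUX.

(* Main.v *)
Require Import Defs.
From mathcomp Require Import all_boot all_order all_algebra.
From mathcomp Require Import ring lra.
Set Implicit Arguments. Unset Strict Implicit. Unset Printing Implicit Defensive.
Import Order.TTheory GRing.Theory Num.Theory.
Local Open Scope ring_scope.
Section Part.
Variable U : finType.
Implicit Types (M N S T B C : {set U}) (P Q pi tau : {set {set U}}) (i : U).

Lemma notin_cover pi M i C : partition pi (M :\ i) -> C \in pi -> i \notin C.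
Proof.
move=> hp hC; apply/negP => /(subsetP (partitionS hp hC)); by rewrite !inE eqxx.
Qed.

Lemma add_to_part pi M i B : partition pi (M :\ i) -> i \in M -> B \in set0 |: pi ->
  partition (add_to pi i B) M.
Proof.
move=> hp iM; rewrite /add_to; case: eqP => [-> _|/eqP B0 hB].
  rewrite -(setD1K iM); apply: partitionU1 => //.
    by apply/set0Pn; exists i; rewrite inE.
  by rewrite disjoints1 !inE eqxx.
have {}hB : B \in pi by move: hB; rewrite !inE (negbTE B0).
have sB := subsetP (partitionS hp hB).
have h1 := partitionD1 hp hB.
have -> : M = (B :|: [set i]) :|: ((M :\ i) :\: B).
  apply/setP => x; rewrite !inE; move: (sB x); rewrite !inE.
  case: (x \in B) => //=; first by move=> /(_ isT)/andP[].
  by case: eqP => [->|] //=; rewrite andbT.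
apply: (partitionU1 h1).
  by apply/set0Pn; exists i; rewrite !inE eqxx orbT.
rewrite -setI_eq0; apply/eqP/setP => x; rewrite !inE.
by case: (x \in B); case: (x == i).
Qed.


Lemma notin_set0U pi M i B : partition pi (M :\ i) -> B \in set0 |: pi -> i \notin B.
Proof.
move=> hp; rewrite !inE => /orP[/eqP->|hB]; first by rewrite inE.
exact: notin_cover hp hB.
Qed.

Lemma pblock_add pi M i B : partition pi (M :\ i) -> i \in M -> B \in set0 |: pi ->
  pblock (add_to pi i B) i = B :|: [set i].
Proof.
move=> hp iM hB; apply: def_pblock.
- exact: partition_trivIset (add_to_part hp iM hB).
- by rewrite /add_to; case: eqP => [->|]; rewrite !inE ?set0U eqxx.
- by rewrite !inE eqxx orbT.
Qed.

Lemma setU1iK B i : i \notin B -> (B :|: [set i]) :\ i = B.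
Proof.
move=> iB; apply/setP => x; rewrite !inE; case: eqP => [->|] //=.
  by rewrite (negbTE iB).
by rewrite orbF.
Qed.

Definition remv i P := let C := pblock P i in
  if C :\ i == set0 then P :\ C else (C :\ i) |: (P :\ C).
Definition hinv i P := (remv i P, pblock P i :\ i).

Lemma remv_add pi M i B : partition pi (M :\ i) -> i \in M -> B \in set0 |: pi ->
  remv i (add_to pi i B) = pi.
Proof.
move=> hp iM hB; have iB := notin_set0U hp hB.
rewrite /remv (pblock_add hp iM hB) setU1iK //.
case: eqP => [B0|/eqP B0].
  rewrite /add_to B0 eqxx set0U setU1K //.
  by apply/negP => /(notin_cover hp); rewrite inE eqxx.
have {}hB : B \in pi by move: hB; rewrite !inE (negbTE B0).
rewrite /add_to (negbTE B0) setU1K ?setD1K //.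
apply/negP => /setD1P [_ /(notin_cover hp)]; by rewrite !inE eqxx orbT.
Qed.

Lemma hinv_add pi M i B : partition pi (M :\ i) -> i \in M -> B \in set0 |: pi ->
  hinv i (add_to pi i B) = (pi, B).
Proof.
move=> hp iM hB; rewrite /hinv (remv_add hp iM hB) (pblock_add hp iM hB).
by rewrite setU1iK // (notin_set0U hp hB).
Qed.

Lemma set1_of C i : i \in C -> C :\ i = set0 -> C = [set i].
Proof. by move=> iC h; rewrite -(setD1K iC) h setU0. Qed.

Lemma remv_part P M i : partition P M -> i \in M -> partition (remv i P) (M :\ i).
Proof.
move=> hP iM; have iC : i \in pblock P i by rewrite mem_pblock (cover_partition hP).
have CP : pblock P i \in P by apply: pblock_mem; rewrite (cover_partition hP).
have h1 := partitionD1 hP CP; have sC := subsetP (partitionS hP CP).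
rewrite /remv; case: eqP => [C0|/eqP C0].
  by move: h1; rewrite (set1_of iC C0).
have -> : M :\ i = (pblock P i :\ i) :|: (M :\: pblock P i).
  apply/setP => x; rewrite !inE; move: (sC x).
  case hx: (x \in pblock P i) => /= h; first by rewrite h // andbT orbF.
  by case: eqP => [e|] /=; [move: hx; rewrite e iC | ].
apply: (partitionU1 h1 C0).
rewrite -setI_eq0; apply/eqP/setP => x; rewrite !inE.
by case: (x \in pblock P i); rewrite ?andbF.
Qed.

Lemma hinv_mem P M i : partition P M -> i \in M ->
  pblock P i :\ i \in set0 |: remv i P.
Proof.
move=> hP iM; rewrite /remv; case: eqP => [->|_]; by rewrite !inE eqxx ?orbT.
Qed.

Lemma add_hinv P M i : partition P M -> i \in M ->
  add_to (remv i P) i (pblock P i :\ i) = P.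
Proof.
move=> hP iM; have iC : i \in pblock P i by rewrite mem_pblock (cover_partition hP).
have CP : pblock P i \in P by apply: pblock_mem; rewrite (cover_partition hP).
rewrite /remv /add_to; case: eqP => [C0|/eqP C0].
  by rewrite -(set1_of iC C0) setD1K.
rewrite setU1K.
  have -> : pblock P i :\ i :|: [set i] = pblock P i.
    apply/setP => x; rewrite !inE; case: eqP => [->|] //=; by rewrite orbF.
  by rewrite setD1K.
apply/negP => /setD1P [ne hin].
have := trivIsetP (partition_trivIset hP) _ _ hin CP ne.
case/set0Pn: C0 => x hx /disjointFr /(_ hx).
by move: hx; rewrite !inE => /andP[_ ->].
Qed.


Lemma reindex_part (R : nmodType) M i (F : {set {set U}} -> R) : i \in M ->
  \sum_(P | partition P M) F P =
  \sum_(pi | partition pi (M :\ i)) \sum_(B in set0 |: pi) F (add_to pi i B).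
Proof.
move=> iM; rewrite pair_big_dep /=.
rewrite (reindex_onto (fun q => add_to q.1 i q.2) (hinv i)) /=; last first.
  by move=> P hP; rewrite /hinv (add_hinv hP iM).
apply: eq_bigl => -[pi B] /=; apply/andP/andP => [[h1 /eqP h2]|[h1 h2]].
  have e1 : pi = remv i (add_to pi i B) by case: h2.
  have e2 : B = pblock (add_to pi i B) i :\ i by case: h2.
  split; first by rewrite [pi in partition pi _]e1; apply: remv_part h1 iM.
  by rewrite [B in B \in _]e2 [pi in _ |: pi]e1; apply: hinv_mem h1 iM.
by split; [apply: add_to_part | rewrite (hinv_add h1 iM h2)].
Qed.


Definition W P : nat := \prod_(C in P) (#|C|.-1)`!.
Definition fac B : nat := if B == set0 then 1%N else #|B|.

Lemma W_U1 B P : B \notin P -> W (B |: P) = ((#|B|.-1)`! * W P)%N.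
Proof. by move=> h; rewrite /W big_setU1. Qed.

Lemma W_add pi M i B : partition pi (M :\ i) -> i \in M -> B \in set0 |: pi ->
  W (add_to pi i B) = (fac B * W pi)%N.
Proof.
move=> hp iM hB; have iB := notin_set0U hp hB.
rewrite /add_to /fac; case: eqP => [_|/eqP B0].
  rewrite W_U1 ?cards1 ?mul1n //.
  by apply/negP => /(notin_cover hp); rewrite inE eqxx.
have {}hB : B \in pi by move: hB; rewrite !inE (negbTE B0).
rewrite W_U1; last first.
  by apply/negP => /setD1P [_ /(notin_cover hp)]; rewrite !inE eqxx orbT.
rewrite -[in W pi](setD1K hB) W_U1 ?setD11 //.
rewrite setUC cardsU1 iB add1n /=.
have : (0 < #|B|)%N by rewrite card_gt0.
case: #|B| => // k _; by rewrite factS mulnA.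
Qed.

Lemma fac_sum pi M i : partition pi (M :\ i) -> i \in M ->
  (\sum_(B in set0 |: pi) fac B)%N = #|M|.
Proof.
move=> hp iM; rewrite big_setU1 ?(partition0 hp) //= /fac eqxx.
rewrite (eq_bigr (fun B => #|B|)); last first.
  by move=> B hB; rewrite (negbTE (partition_neq0 hp hB)).
by rewrite -(card_partition hp) [in RHS](cardsD1 i) iM.
Qed.

End Part.

Section Ew.
Variables (U : finType) (R : realFieldType).
Implicit Types (M N S T B C : {set U}) (P Q pi tau : {set {set U}}) (i : U).

Lemma fact_neq0 n : (n`!)%:R != 0 :> R.
Proof. by rewrite pnatr_eq0 -lt0n fact_gt0. Qed.

Lemma W_sum M : \sum_(P | partition P M) ((W P)%:R : R) = (#|M|`!)%:R.
Proof.
have [n hM] : exists n, #|M| = n by eexists.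
elim: n M hM => [|n IH] M hM.
  move/eqP: hM; rewrite cards_eq0 => /eqP ->.
  rewrite (eq_bigl (fun P => P == set0)); last by move=> P; rewrite partition_set0.
  by rewrite big_pred1_eq /W big_set0 cards0.
have : (0 < #|M|)%N by rewrite hM.
rewrite card_gt0 => /set0Pn [i iM].
rewrite (reindex_part _ iM).
have hMi : #|M :\ i| = n by move: hM; rewrite (cardsD1 i) iM add1n => -[].
have IH' := IH _ hMi; rewrite hMi in IH'.
rewrite hM factS natrM -IH' mulr_sumr; apply: eq_bigr => pi hp.
rewrite (eq_bigr (fun B => (fac B)%:R * (W pi)%:R)); last first.
  by move=> B hB; rewrite (W_add hp iM hB) natrM.
by rewrite -mulr_suml -natr_sum (fac_sum hp iM) hM.
Qed.

Lemma ewensE N P : partition P N -> ewens R N P = (W P)%:R / (#|N|`!)%:R.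
Proof. by move=> hP; rewrite /ewens hP natr_prod. Qed.

Lemma ewens_ge0 N P : 0 <= ewens R N P.
Proof.
rewrite /ewens; case: ifP => // _; apply: divr_ge0; last by apply: ler0n.
by apply: prodr_ge0 => C _; apply: ler0n.
Qed.

Lemma ewens_sum N : \sum_(P | partition P N) ewens R N P = 1.
Proof.
rewrite (eq_bigr (fun P => (W P)%:R / (#|N|`!)%:R)); last by move=> P; apply: ewensE.
by rewrite -mulr_suml W_sum divff // fact_neq0.
Qed.

Lemma ewens_cons pi M i : partition pi (M :\ i) -> i \in M ->
  \sum_(B in set0 |: pi) ewens R M (add_to pi i B) = ewens R (M :\ i) pi.
Proof.
move=> hp iM.
rewrite (eq_bigr (fun B => (fac B)%:R * ((W pi)%:R / (#|M|`!)%:R))); last first.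
  by move=> B hB; rewrite (ewensE (add_to_part hp iM hB)) (W_add hp iM hB) natrM mulrA.
rewrite -mulr_suml -natr_sum (fac_sum hp iM) (ewensE hp).
rewrite (cardsD1 i M) iM add1n factS natrM.
have h1 := fact_neq0 #|M :\ i|.
have h2 : (#|M :\ i|.+1)%:R != 0 :> R by rewrite pnatr_eq0.
by field; rewrite h1 -[1 + _](natrD _ 1%N) add1n h2.
Qed.

End Ew.

Section Mono.
Variables (U : finType) (R : realFieldType).
Implicit Types (M N S T B C : {set U}) (P Q pi tau : {set {set U}}) (i : U).

Lemma setDD1 N S i : (N :\: S) :\ i = (N :\ i) :\: S.
Proof. by apply/setP => x; rewrite !inE; case: (x \in S); case: (x == i). Qed.

Lemma setDU1 N S i : N :\: (S :|: [set i]) = (N :\ i) :\: S.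
Proof.
by apply/setP => x; rewrite !inE negb_or; case: (x \in S); case: (x == i).
Qed.

Lemma vbar_marg N (w : {set U} -> {set {set U}} -> R) S i : i \in N -> i \notin S ->
  vbar_star N w (S :|: [set i]) - vbar_star N w S =
  \sum_(pi | partition pi ((N :\ i) :\: S)) \sum_(B in set0 |: pi)
     ewens R (N :\: S) (add_to pi i B) * (w (S :|: [set i]) pi - w S (add_to pi i B)).
Proof.
move=> iN iS; have iM : i \in N :\: S by rewrite inE iS iN.
rewrite /vbar_star (reindex_part _ iM) setDD1 setDU1 -sumrB; apply: eq_bigr => pi hp.
have hp' : partition pi ((N :\: S) :\ i) by rewrite setDD1.
have := ewens_cons R hp' iM; rewrite setDD1 => <-.
rewrite mulr_suml -sumrB; apply: eq_bigr => B _.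
by rewrite mulrBr.
Qed.

Lemma MPW_mono : monotone (@MPW U R).
Proof.
move=> N w z i _ _ iN H; rewrite /MPW /shapley; apply: ler_sum => S hS.
have iS : i \notin S by apply/negP => /(subsetP hS); rewrite !inE eqxx.
apply: ler_wpM2l; first by apply: divr_ge0; apply: ler0n.
rewrite !vbar_marg //; apply: ler_sum => pi hp; apply: ler_sum => B hB.
by apply: ler_wpM2l; [apply: ewens_ge0 | apply: H].
Qed.

End Mono.

Section ShPE.
Variables (U : finType) (R : realFieldType).
Implicit Types (M N S T B C : {set U}) (P Q pi tau : {set {set U}}) (i : U).

Definition coef N T : R := ((#|T|`! * (#|N| - #|T| - 1)`!)%:R / (#|N|`!)%:R).

Lemma card_NiT N T i : i \in N -> T \subset N :\ i -> #|(N :\ i) :\: T| = (#|N| - #|T| - 1)%N.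
Proof.
move=> iN hT; rewrite cardsD (setIidPr hT) [#|N|](cardsD1 i) iN add1n.
by rewrite subnAC subn1.
Qed.

Lemma E1 N T i tau : i \in N -> T \subset N :\ i -> partition tau ((N :\ i) :\: T) ->
  ewens R N ((T :|: [set i]) |: tau) = coef N T * ewens R ((N :\ i) :\: T) tau.
Proof.
move=> iN hT hp.
have iT : i \notin T by apply/negP => /(subsetP hT); rewrite !inE eqxx.
have hP : partition ((T :|: [set i]) |: tau) N.
  have -> : N = (T :|: [set i]) :|: ((N :\ i) :\: T).
    apply/setP => x; rewrite !inE; move: (subsetP hT x); rewrite !inE.
    case: (x \in T) => /=; first by move=> /(_ isT)/andP[_ ->].
    by case: eqP => [->|] //= _; rewrite iN.
  apply: (partitionU1 hp); first by apply/set0Pn; exists i; rewrite !inE eqxx orbT.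
  rewrite -setI_eq0; apply/eqP/setP => x; rewrite !inE.
  by case: (x \in T); case: (x == i); rewrite ?andbF.
rewrite (ewensE R hP) (ewensE R hp) W_U1; last first.
  apply/negP => /(partitionS hp)/subsetP/(_ i); rewrite !inE eqxx orbT => /(_ isT).
  by case/and3P.
rewrite card_NiT // setUC cardsU1 (negbTE iT) add1n /= /coef natrM.
have h1 := fact_neq0 R (#|N| - #|T| - 1).
have h2 := fact_neq0 R #|N|.
by field; rewrite h1 h2.
Qed.

Lemma E2 N T i P : i \in N -> T \subset N :\ i -> T != set0 -> partition P (N :\: T) ->
  (#|T|%:R / (#|N| - #|T|)%:R) * ewens R N (T |: P) = coef N T * ewens R (N :\: T) P.
Proof.
move=> iN hT T0 hp.
have sTN : T \subset N by apply: (subset_trans hT); apply: subD1set.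
have hP : partition (T |: P) N.
  have -> : N = T :|: (N :\: T).
    apply/setP => x; rewrite !inE; move: (subsetP sTN x).
    by case: (x \in T) => //= /(_ isT) ->.
  apply: (partitionU1 hp T0).
  rewrite -setI_eq0; apply/eqP/setP => x; rewrite !inE.
  by case: (x \in T); rewrite ?andbF.
rewrite (ewensE R hP) (ewensE R hp) W_U1; last first.
  apply/negP => /(partitionS hp)/subsetP => h; case/set0Pn: T0 => x hx.
  by move: (h x hx); rewrite !inE hx.
have ht : (0 < #|T|)%N by rewrite card_gt0.
have hlt : (#|T| < #|N|)%N.
  apply: (@leq_trans #|N :\ i|.+1); first by rewrite ltnS subset_leq_card.
  by rewrite [#|N|](cardsD1 i) iN add1n.
rewrite cardsD (setIidPr sTN) /coef.
move: ht hlt; case: #|T| => // t _ hlt.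
have [k hk] : exists k, (#|N| - t.+1 = k.+1)%N.
  by exists (#|N| - t.+1).-1; rewrite prednK // subn_gt0.
rewrite hk subn1 /= !factS !natrM.
have h1 := fact_neq0 R k.
have h2 := fact_neq0 R #|N|.
have h3 : (k.+1)%:R != 0 :> R by rewrite pnatr_eq0.
by field; rewrite h1 h2 -[1 + _](natrD _ 1%N) add1n h3.
Qed.


Lemma ShP_ewens N (w : {set U} -> {set {set U}} -> R) i : is_game N w -> i \in N ->
  ShP (ewens R) N w i = MPW N w i.
Proof.
move=> hw iN; rewrite /ShP /MPW /shapley; apply: eq_bigr => T hT.
have iT : i \notin T by apply/negP => /(subsetP hT); rewrite !inE eqxx.
have iM : i \in N :\: T by rewrite inE iT iN.
rewrite sumrB mulrBr; congr (_ - _).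
  rewrite /vbar_star setDU1 mulr_sumr; apply: eq_bigr => tau htau.
  by rewrite E1 // /coef mulrA.
case: (eqVneq T set0) => [T0|T0].
  transitivity (0 : R).
    by apply: big1 => tau _; rewrite T0 cards0 mul0r mul0r.
  rewrite /vbar_star big1 ?mulr0 // => P; rewrite T0 setD0 => hP.
  by rewrite hw // mulr0.
rewrite /vbar_star (reindex_part _ iM) setDD1 mulr_sumr; apply: eq_bigr => tau htau.
have hp' : partition tau ((N :\: T) :\ i) by rewrite setDD1.
rewrite !mulr_sumr; apply: eq_bigr => B hB.
by rewrite mulrA (E2 iN hT T0 (add_to_part hp' iM hB)) /coef mulrA.
Qed.

End ShPE.

Section PartA.
Variables (U : finType) (R : realFieldType).
Implicit Types (M N S T B C : {set U}) (P Q pi tau : {set {set U}}) (i : U).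

Definition gind T tau i : {set U} -> {set {set U}} -> R := fun S pi =>
  ((S == T :|: [set i]) && (pi == tau))%:R + ((S == T) && (remv i pi == tau))%:R.

Lemma setU1_eq S T i : i \notin S -> i \notin T -> (S :|: [set i] == T :|: [set i]) = (S == T).
Proof.
move=> iS iT; apply/eqP/eqP => [h|->//].
by rewrite -(setU1iK iS) h setU1iK.
Qed.

Lemma gind_game N T tau i : T != set0 -> is_game N (gind T tau i).
Proof.
move=> T0 pi _; rewrite /gind [set0 == T]eq_sym (negbTE T0)/=.
have -> : (set0 == T :|: [set i]) = false.
  by rewrite eq_sym; apply/negbTE/set0Pn; exists i; rewrite !inE eqxx orbT.
by rewrite addr0.
Qed.

Lemma gind_eval1 S T tau i pi : i \notin S -> i \notin T ->
  gind T tau i (S :|: [set i]) pi = ((S == T) && (pi == tau))%:R.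
Proof.
move=> iS iT; rewrite /gind setU1_eq //.
have -> : (S :|: [set i] == T) = false.
  by apply/negbTE/negP => /eqP h; move: iT; rewrite -h !inE eqxx orbT.
by rewrite addr0.
Qed.

Lemma gind_eval2 N S T tau i pi B : i \in N -> S \subset N :\ i ->
  partition pi ((N :\ i) :\: S) -> B \in set0 |: pi ->
  gind T tau i S (add_to pi i B) = ((S == T) && (pi == tau))%:R.
Proof.
move=> iN hS hp hB.
have iS : i \notin S by apply/negP => /(subsetP hS); rewrite !inE eqxx.
have iM : i \in N :\: S by rewrite inE iS iN.
have hp' : partition pi ((N :\: S) :\ i) by rewrite setDD1.
rewrite /gind (remv_add hp' iM hB).
have -> : (S == T :|: [set i]) = false.
  by apply/negbTE/negP => /eqP h; move: iS; rewrite h !inE eqxx orbT.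
by rewrite add0r.
Qed.

Lemma ShP0 p N i : ShP p N (fun _ _ => 0 : R) i = 0.
Proof.
rewrite /ShP big1 // => T _; rewrite big1 // => tau _.
by rewrite mulr0 big1 ?mulr0 ?subr0 // => B _; rewrite mulr0.
Qed.

Definition cT N T : R := #|T|%:R / (#|N| - #|T|)%:R.

Lemma ShP_gind p N T tau i : i \in N -> T \subset N :\ i -> partition tau ((N :\ i) :\: T) ->
  ShP p N (gind T tau i) i =
  p N ((T :|: [set i]) |: tau) - cT N T * \sum_(B in set0 |: tau) p N (T |: add_to tau i B).
Proof.
move=> iN hT htau.
have iT : i \notin T by apply/negP => /(subsetP hT); rewrite !inE eqxx.
have E : forall T', T' \subset N :\ i -> forall tau', partition tau' ((N :\ i) :\: T') ->
  p N ((T' :|: [set i]) |: tau') * gind T tau i (T' :|: [set i]) tau' -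
  (#|T'|%:R / (#|N| - #|T'|)%:R) *
   \sum_(B in set0 |: tau') p N (T' |: add_to tau' i B) * gind T tau i T' (add_to tau' i B)
  = ((T' == T) && (tau' == tau))%:R *
    (p N ((T' :|: [set i]) |: tau') - cT N T' * \sum_(B in set0 |: tau') p N (T' |: add_to tau' i B)).
  move=> T' hT' tau' htau'.
  have iT' : i \notin T' by apply/negP => /(subsetP hT'); rewrite !inE eqxx.
  rewrite gind_eval1 //.
  rewrite (eq_bigr (fun B => p N (T' |: add_to tau' i B) * ((T' == T) && (tau' == tau))%:R)); last first.
    by move=> B hB; rewrite (gind_eval2 _ _ iN hT' htau' hB).
  rewrite -mulr_suml /cT; ring.
rewrite /ShP (eq_bigr (fun T' => \sum_(tau' | partition tau' ((N :\ i) :\: T'))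
   ((T' == T) && (tau' == tau))%:R *
    (p N ((T' :|: [set i]) |: tau') - cT N T' * \sum_(B in set0 |: tau') p N (T' |: add_to tau' i B))));
  last by move=> T' hT'; apply: eq_bigr => tau' htau'; apply: E.
rewrite (bigD1 T) //= [X in _ + X]big1 ?addr0; last first.
  by move=> T' /andP[_ /negbTE ->]; apply: big1 => tau' _; rewrite mul0r.
rewrite (bigD1 tau) //= [X in _ + X]big1 ?addr0; last first.
  by move=> tau' /andP[_ /negbTE ->]; rewrite andbF mul0r.
by rewrite !eqxx mul1r.
Qed.

Lemma R1 p N T tau i : monotone (ShP p) -> i \in N -> T \subset N :\ i -> T != set0 ->
  partition tau ((N :\ i) :\: T) ->
  p N ((T :|: [set i]) |: tau) = cT N T * \sum_(B in set0 |: tau) p N (T |: add_to tau i B).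
Proof.
move=> H iN hT T0 htau.
have iT : i \notin T by apply/negP => /(subsetP hT); rewrite !inE eqxx.
have hm : forall S pi, S \subset N :\ i -> partition pi ((N :\ i) :\: S) ->
   forall B, B \in set0 |: pi ->
   gind T tau i (S :|: [set i]) pi - gind T tau i S (add_to pi i B) = 0.
  move=> S pi hS hp B hB.
  have iS : i \notin S by apply/negP => /(subsetP hS); rewrite !inE eqxx.
  by rewrite gind_eval1 // (gind_eval2 _ _ iN hS hp hB) subrr.
have g1 : is_game N (gind T tau i) by apply: gind_game.
have g0 : is_game N (fun _ _ => 0 : R) by [].
have h1 := H N (gind T tau i) (fun _ _ => 0) i g1 g0 iN.
have h2 := H N (fun _ _ => 0) (gind T tau i) i g0 g1 iN.
rewrite ShP0 ShP_gind // in h1 h2.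
apply/eqP; rewrite -subr_eq0 eq_le h2 ?h1 //.
  by move=> S pi hS hp B hB; rewrite hm // subrr.
by move=> S pi hS hp B hB; rewrite hm // subrr.
Qed.


Lemma split_fib (p : {set U} -> {set {set U}} -> R) N Q i T : monotone (ShP p) -> i \in N -> partition Q (N :\ i) -> T \in Q ->
  p N (add_to Q i T) * #|N|%:R = #|T|%:R * \sum_(B in set0 |: Q) p N (add_to Q i B).
Proof.
move=> H iN hQ TQ.
have hT := partitionS hQ TQ; have T0 := partition_neq0 hQ TQ.
have htau := partitionD1 hQ TQ.
have r := R1 H iN hT T0 htau.
have e1 : (T :|: [set i]) |: (Q :\ T) = add_to Q i T by rewrite /add_to (negbTE T0).
have e2 : \sum_(B in set0 |: (Q :\ T)) p N (T |: add_to (Q :\ T) i B) =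
   \sum_(B in set0 |: Q) p N (add_to Q i B) - p N (add_to Q i T).
  rewrite [in RHS](bigD1 T) /=; last by rewrite !inE TQ orbT.
  rewrite -addrA addrCA subrr addr0; apply: eq_big => [B|B hB].
    rewrite !inE; case: (eqVneq B T) => [->|ne] /=; first by rewrite (negbTE T0) andbF.
    by rewrite andbT.
  move: hB; rewrite /add_to !inE; case: eqP => [-> _|/eqP B0 /= /andP[ne BQ]].
    by rewrite setUCA setD1K.
  rewrite setUCA; congr (p N (_ |: _)); apply/setP => C; rewrite !inE.
  by case: (eqVneq C T) => [->|] //=; rewrite TQ andbT eq_sym ne.
rewrite e1 e2 in r.
set pT := p N (add_to Q i T) in r *; set F := \sum_(B in set0 |: Q) _ in r *.
clearbody pT F.
have hlt : (#|T| < #|N|)%N.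
  apply: (@leq_trans #|N :\ i|.+1); first by rewrite ltnS subset_leq_card.
  by rewrite [#|N|](cardsD1 i) iN add1n.
have hd : (#|N| - #|T|)%:R != 0 :> R by rewrite pnatr_eq0 subn_eq0 -ltnNge.
have h : pT * (#|N| - #|T|)%:R = #|T|%:R * (F - pT).
  by rewrite [in LHS]r /cT mulrAC -[_ / _ * _]mulrA mulVf // mulr1.
move: h; rewrite natrB; last exact: ltnW.
move: (#|N|%:R) (#|T|%:R) => n t h.
have -> : pT * n = pT * (n - t) + pT * t by ring.
by rewrite h; ring.
Qed.

Lemma split_rel (p : {set U} -> {set {set U}} -> R) N Q i T : monotone (ShP p) -> i \in N -> partition Q (N :\ i) -> T \in Q ->
  p N (add_to Q i T) = #|T|%:R * p N (add_to Q i set0).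
Proof.
move=> H iN hQ TQ.
set F := \sum_(B in set0 |: Q) p N (add_to Q i B).
have hn : #|N| = #|N :\ i|.+1 by rewrite [#|N|](cardsD1 i) iN add1n.
have hF : F * #|N|%:R = p N (add_to Q i set0) * #|N|%:R + #|N :\ i|%:R * F.
  rewrite {1}/F big_setU1 ?(partition0 hQ) //= mulrDl mulr_suml; congr (_ + _).
  rewrite (eq_bigr (fun B => #|B|%:R * F)); last by move=> B hB; rewrite (split_fib H iN hQ hB).
  by rewrite -mulr_suml -natr_sum -(card_partition hQ).
have hn0 : #|N|%:R != 0 :> R by rewrite hn pnatr_eq0.
have hT := split_fib H iN hQ TQ; rewrite -/F in hT.
clearbody F.
have hF' : F = p N (add_to Q i set0) * #|N|%:R.
  move: hF; rewrite hn -natr1 => hF.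
  have -> : F = F * (#|N :\ i|%:R + 1) - #|N :\ i|%:R * F by ring.
  by rewrite hF; ring.
apply: (mulIf hn0); rewrite hT hF'; ring.
Qed.

End PartA.

Section Ratio.
Variables (U : finType) (R : realFieldType).
Implicit Types (M N S T B C : {set U}) (P Q pi tau : {set {set U}}) (i : U).

Definition msr P : nat := (\sum_(C in P) (#|C|).-1)%N.

Lemma msr_add pi M i B : partition pi (M :\ i) -> i \in M -> B \in set0 |: pi ->
  msr (add_to pi i B) = ((B != set0) + msr pi)%N.
Proof.
move=> hp iM hB; have iB := notin_set0U hp hB.
rewrite /add_to /msr; case: eqP => [_|/eqP B0].
  rewrite big_setU1 ?cards1 //=.
  by apply/negP => /(notin_cover hp); rewrite inE eqxx.
have {}hB : B \in pi by move: hB; rewrite !inE (negbTE B0).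
rewrite big_setU1 /=; last first.
  by apply/negP => /setD1P [_ /(notin_cover hp)]; rewrite !inE eqxx orbT.
rewrite -[in RHS](setD1K hB) big_setU1 ?setD11 //=.
rewrite setUC cardsU1 iB add1n /=.
have : (0 < #|B|)%N by rewrite card_gt0.
by case: #|B| => // k _ /=; rewrite add1n addSn.
Qed.

Lemma msr0_card1 P N : partition P N -> msr P = 0%N -> forall C, C \in P -> #|C| = 1%N.
Proof.
move=> hP /eqP; rewrite /msr sum_nat_eq0 => /forall_inP h C CP.
have := h C CP; have : (0 < #|C|)%N by rewrite card_gt0 (partition_neq0 hP CP).
by case: #|C| => // -[].
Qed.

Lemma msr_big P N : partition P N -> (0 < msr P)%N -> exists2 C, C \in P & (1 < #|C|)%N.
Proof.
move=> hP; case: (pickP [pred C in P | 1 < #|C|]%N) => [C /andP[h1 h2] _|h].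
  by exists C.
rewrite /msr big1 // => C CP; have := h C; rewrite /= CP /= => /negbT.
by rewrite -leqNgt; case: #|C| => // -[].
Qed.

Lemma single_sub P P' N : partition P N -> partition P' N ->
  (forall C, C \in P -> #|C| = 1%N) -> (forall C, C \in P' -> #|C| = 1%N) -> P \subset P'.
Proof.
move=> hP hP' h h'; apply/subsetP => C CP.
have /cards1P [x Cx] : #|C| == 1%N by rewrite h.
have xN : x \in cover P' by rewrite (cover_partition hP') -(cover_partition hP);
  apply/bigcupP; exists C; rewrite // Cx set11.
have DP := pblock_mem xN; have xD : x \in pblock P' x by rewrite mem_pblock.
have /cards1P [y Dy] : #|pblock P' x| == 1%N by rewrite h'.
move: xD; rewrite Dy => /set1P ey; move: DP; by rewrite Dy -ey Cx.
Qed.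

Lemma step (p : {set U} -> {set {set U}} -> R) N P : monotone (ShP p) -> partition P N ->
  (0 < msr P)%N -> exists P'' k, [/\ partition P'' N, (msr P'' < msr P)%N,
     p N P = k * p N P'' & ((W P)%:R : R) = k * (W P'')%:R].
Proof.
move=> H hP hm; have [C CP hC] := msr_big hP hm.
have [i iC] : exists i, i \in C.
  by apply/set0Pn; rewrite -card_gt0; apply: ltnW.
have iN : i \in N by apply: (subsetP (partitionS hP CP)).
have eC : pblock P i = C by apply: def_pblock => //; apply: partition_trivIset hP.
have hQ := remv_part hP iN; have hTm := hinv_mem hP iN; have eP := add_hinv hP iN.
rewrite eC in hTm eP.
have T0 : C :\ i != set0.
  by rewrite -card_gt0; move: hC; rewrite (cardsD1 i) iC add1n.
have TQ : C :\ i \in remv i P by move: hTm; rewrite !inE (negbTE T0).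
have h0 : set0 \in set0 |: remv i P by rewrite setU11.
exists (add_to (remv i P) i set0), (#|C :\ i|%:R); split.
- exact: add_to_part hQ iN h0.
- by rewrite -{2}eP !(msr_add hQ iN) // T0 eqxx.
- by rewrite -{1}eP (split_rel H iN hQ TQ).
- by rewrite -{1}eP !(W_add hQ iN) // /fac eqxx (negbTE T0) mul1n natrM.
Qed.

Lemma ratio (p : {set U} -> {set {set U}} -> R) N : monotone (ShP p) ->
  forall P P', partition P N -> partition P' N -> p N P * (W P')%:R = p N P' * (W P)%:R.
Proof.
move=> H P P'; move: {2}(msr P + msr P')%N (leqnn (msr P + msr P')%N) => n.
elim: n P P' => [|n IH] P P'.
  rewrite leqn0 addn_eq0 => /andP[/eqP h1 /eqP h2] hP hP'.
  have h1' := msr0_card1 hP h1; have h2' := msr0_card1 hP' h2.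
  have -> // : P = P'.
  by apply/eqP; rewrite eqEsubset (single_sub hP hP') // (single_sub hP' hP).
move=> hn hP hP'.
have st : forall P P', partition P N -> partition P' N -> (msr P + msr P' <= n.+1)%N ->
    (0 < msr P)%N -> p N P * (W P')%:R = p N P' * (W P)%:R.
  move=> P1 P2 hP1 hP2 hn1 hm.
  have [P3 [k [hP3 hlt -> ->]]] := step H hP1 hm.
  rewrite -mulrA IH //; first by rewrite mulrCA.
  by rewrite -ltnS (leq_trans _ hn1) // ltn_add2r.
case: (posnP (msr P)) => [h1|]; last by apply: st.
case: (posnP (msr P')) => [h2|h2]; last by apply/esym; apply: st => //; rewrite addnC.
have h1' := msr0_card1 hP h1; have h2' := msr0_card1 hP' h2.
have -> // : P = P'.
by apply/eqP; rewrite eqEsubset (single_sub hP hP') // (single_sub hP' hP).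
Qed.

End Ratio.

Theorem corollary3 (U : finType) (R : realFieldType)
    (p : {set U} -> {set {set U}} -> R) :
  random_partition p ->
  (monotone (ShP p) <-> (forall N P, p N P = ewens R N P)) /\
  (monotone (ShP p) <->
     (forall (N : {set U}) (w : {set U} -> {set {set U}} -> R),
        is_game N w -> forall i, i \in N -> ShP p N w i = MPW N w i)).
Proof.
move=> hp.
have A : monotone (ShP p) -> forall N P, p N P = ewens R N P.
  move=> H N P; case: (boolP (partition P N)) => hP; last first.
    by have [_ [h _]] := hp N; rewrite h // /ewens (negbTE hP).
  have [_ [_ hs]] := hp N.
  have e : \sum_(P' | partition P' N) p N P * (W P')%:R =
           \sum_(P' | partition P' N) p N P' * (W P)%:R.
    by apply: eq_bigr => P' hP'; apply: ratio.
  rewrite -mulr_sumr -mulr_suml hs mul1r W_sum in e.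
  rewrite (ewensE R hP) -e mulfK //; exact: fact_neq0.
have B : (forall N P, p N P = ewens R N P) ->
    forall N (w : {set U} -> {set {set U}} -> R), is_game N w ->
    forall i, i \in N -> ShP p N w i = MPW N w i.
  move=> he N w hw i iN; rewrite -ShP_ewens // /ShP.
  apply: eq_bigr => T _; apply: eq_bigr => tau _; rewrite !he; congr (_ - _ * _).
  by apply: eq_bigr => B _; rewrite he.
have C : (forall N (w : {set U} -> {set {set U}} -> R), is_game N w ->
    forall i, i \in N -> ShP p N w i = MPW N w i) -> monotone (ShP p).
  move=> h N w z i gw gz iN hm; rewrite !h //; exact: MPW_mono.
split; split => [H|H]; [exact: A | exact: C (B H) | exact: B (A H) | exact: C].
Qed.
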